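(* Let $(\Omega,\mathcal G,\alpha)$ be a dynamical system. The following are equivalent: (i) $(\Omega,\mathcal G,\alpha)$ is minimal; (ii) $\Omega=\Omega_{\mathrm{PE}}$; (iii) $\Omega_{\mathrm{PE}}$ is closed and non-empty.
   Context: $(\mathcal G,+)$ is a countably infinite discrete group (written additively, not necessarily abelian). A dynamical system $(\Omega,\mathcal G,\alpha)$ consists of a compact metric space $\Omega$ and a map $\alpha$ from $\mathcal G$ to the homeomorphisms of $\Omega$ with $\alpha(g+h)=\alpha(g)\circ\alpha(h)$. It is minimal if every orbit $\{\alpha(g)(\omega):g\in\mathcal G\}$ is dense in $\Omega$. A sequence $(g_n)$ satisfies $g_n\to\infty$ if it eventually leaves every finite subset of $\mathcal G$. $L(\omega)=\{\nu\in\Omega:\exists (g_n),\ g_n\to\infty,\ \alpha(g_n)(\omega)\to\nu\}$; $\omega$ is pseudoergodic if $L(\omega)=\Omega$, and $\Omega_{\mathrm{PE}}$ denotes the set of pseudoergodic elements. *)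

(* Defs.v *)
From HB Require Import structures.
From mathcomp Require Import all_boot all_order all_algebra.
From mathcomp Require Import all_classical all_reals all_analysis.
Set Implicit Arguments. Unset Strict Implicit. Unset Printing Implicit Defensive.
Import Order.TTheory GRing.Theory Num.Theory.
Local Open Scope classical_set_scope.

Record is_group (G : Type) (add : G -> G -> G) (zero : G) (opp : G -> G) : Prop := {
  grp_addA : forall x y z, add x (add y z) = add (add x y) z;
  grp_add0g : forall x, add zero x = x;
  grp_addg0 : forall x, add x zero = x;
  grp_addNg : forall x, add (opp x) x = zero;
  grp_addgN : forall x, add x (opp x) = zero }.

Definition countably_infinite (G : Type) : Prop :=
  countable [set: G] /\ infinite_set [set: G].

Definition homeomorphism (T : topologicalType) (f : T -> T) : Prop :=
  continuous f /\ exists g : T -> T, [/\ cancel f g, cancel g f & continuous g].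

Definition dynamical_system (G : Type) (add : G -> G -> G) (T : topologicalType)
  (alpha : G -> T -> T) : Prop :=
  (forall g, homeomorphism (alpha g)) /\
  (forall g h, alpha (add g h) = alpha g \o alpha h).

Definition tends_to_infinity (G : Type) (gs : nat -> G) : Prop :=
  forall F : set G, finite_set F -> exists N, forall n, (N <= n)%N -> ~ F (gs n).

Definition orbit (G : Type) (T : Type) (alpha : G -> T -> T) (w : T) : set T :=
  [set alpha g w | g in [set: G]].

Definition minimal (G : Type) (T : topologicalType) (alpha : G -> T -> T) : Prop :=
  forall w : T, closure (orbit alpha w) = [set: T].

Definition limit_set (G : Type) (T : topologicalType) (alpha : G -> T -> T) (w : T)
  : set T :=
  [set nu | exists gs : nat -> G, tends_to_infinity gs /\
            (fun n => alpha (gs n) w) @ \oo --> nu].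

Definition pseudoergodic (G : Type) (T : topologicalType) (alpha : G -> T -> T)
  (w : T) : Prop := limit_set alpha w = [set: T].

Definition Omega_PE (G : Type) (T : topologicalType) (alpha : G -> T -> T) : set T :=
  [set w | pseudoergodic alpha w].

(* Main.v *)
Require Import Defs.
From HB Require Import structures.
From mathcomp Require Import all_boot all_order all_algebra.
From mathcomp Require Import all_classical all_reals all_analysis.
Local Open Scope classical_set_scope.

Import Order.TTheory GRing.Theory Num.Theory.

Section PE.
Variables (G : Type) (add : G -> G -> G) (zero : G) (opp : G -> G)
  (R : realType) (Omega : metricType R) (alpha : G -> Omega -> Omega).
Hypothesis hG : is_group add zero opp.
Hypothesis hds : dynamical_system add alpha.
Local Open Scope ring_scope.

Lemma alpha_inj g : injective (alpha g).
Proof.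
have [/(_ g) [_ [h [c1 _ _]]] _] := hds.
exact: can_inj c1.
Qed.

Lemma alpha0 x : alpha zero x = x.
Proof.
have [_ hm] := hds.
apply: (@alpha_inj zero).
have := hm zero zero; rewrite (grp_add0g hG) => e.
exact: (esym (congr1 (fun f => f x) e)).
Qed.

Lemma alphaA g h x : alpha (add g h) x = alpha g (alpha h x).
Proof. by have [_ hm] := hds; rewrite hm. Qed.

Lemma alphaNK h x : alpha (opp h) (alpha h x) = x.
Proof. by rewrite -alphaA (grp_addNg hG) alpha0. Qed.

Lemma limit_closure w : limit_set alpha w `<=` closure (Defs.orbit alpha w).
Proof.
move=> nu [gs [_ cv]].
apply: (closed_cvg _ (@closed_closure _ _) _ _ cv).
apply: nearW => n; apply: subset_closure; by exists (gs n).
Qed.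


Lemma key (hmin : minimal alpha) (hc : compact [set: Omega])
  (hinf : infinite_set [set: G]) (w nu : Omega) (N : set Omega) :
  nbhs nu N -> infinite_set [set g | N (alpha g w)].
Proof.
move=> hN fin.
set F := [set g | N (alpha g w)].
set T := (fun g => alpha g w) @` F.
set Tm := T `\ nu.
have acc : accessible_space Omega.
  by apply: hausdorff_accessible; exact: metric_hausdorff.
have clTm : closed Tm.
  move: acc => /accessible_finite_set_closed; apply.
  by apply: finite_setD; exact: finite_image.
have nU : nbhs nu (N `&` ~` Tm).
  apply: filterI => //; apply: open_nbhs_nbhs; split.
    exact: closed_openC.
  by move=> [_ /(_ erefl)].
have [U [oU Unu] sU] : exists2 U, open_nbhs nu U & U `<=` N `&` ~` Tm.
  by move: nU; rewrite nbhsE.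
have cl1 : forall x : Omega, closed [set x].
  exact: accessible_closed_set1.
have Usub : U `<=` [set nu].
  move=> z Uz; apply: contrapT => znu.
  have nz : nbhs z (U `&` ~` [set nu]).
    apply: open_nbhs_nbhs; split; last by split.
    by apply: openI => //; exact: closed_openC.
  have := hmin w; rewrite -subTset => /(_ z I) /(_ _ nz).
  move=> [y [[g _ <-] [/sU [Ng nTm] ne]]].
  apply: nTm; split => //; by exists g.
have o1 : open [set nu].
  suff -> : [set nu] = U by [].
  by apply/seteqP; split => // x ->.
have hh : forall y, exists h, alpha h y = nu.
  move=> y; have := hmin y; rewrite -subTset => /(_ nu I).
  move=> /(_ [set nu] (open_nbhs_nbhs (conj o1 erefl))).
  by move=> [z [[g _ <-] e]]; exists g.
have [h hP] := choice hh.
have oall : forall y : Omega, open [set y].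
  move=> y.
  suff -> : [set y] = alpha (h y) @^-1` [set nu].
    apply: open_comp => // x _.
    by have [/(_ (h y)) [c _]] := hds.
  apply/seteqP; split => x /=; first by move=> ->.
  by rewrite -(hP y) => /alpha_inj.
have finO : finite_set [set: Omega].
  apply: contrapT => infO.
  have PF := frechet_properfilter infO.
  have hF : frechet_filter [set: Omega].
    by rewrite /frechet_filter /= setCT; exact: finite_set0.
  have [p [_ clp]] := hc _ PF hF.
  have [x [nx e]] : (~` [set p]) `&` [set p] !=set0.
    apply: clp.
    - by rewrite /frechet_filter /= setCK; exact: finite_set1.
    - by apply: open_nbhs_nbhs; split; [exact: oall|].
  by apply: nx.
apply: hinf.
apply: (sub_finite_set _ (finite_image2 (fun y f => add (opp (h y)) f) finO fin)).
move=> g _; exists (alpha g w) => //; exists (add (h (alpha g w)) g).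
  rewrite /F /= alphaA hP; exact: nbhs_singleton.
by rewrite (grp_addA hG) (grp_addNg hG) (grp_add0g hG).
Qed.


Lemma seq_bound (s : seq nat) : exists M, forall x, x \in s -> (x < M)%N.
Proof.
elim: s => [|a s [M hM]]; first by exists 0%N.
exists (maxn a.+1 M) => x; rewrite in_cons => /orP [/eqP -> | /hM].
  by rewrite leq_max leqnn.
by move=> xM; rewrite leq_max xM orbT.
Qed.

Lemma min_PE (hmin : minimal alpha) (hc : compact [set: Omega])
  (hinf : infinite_set [set: G]) (hcnt : countable [set: G]) (w : Omega) :
  pseudoergodic alpha w.
Proof.
apply/seteqP; split => // nu _.
have [fi fiinj] := countable_injP _ hcnt.
have ex : forall n : nat, exists g, ball nu (n.+1%:R^-1 : R) (alpha g w) /\ (n <= fi g)%N.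
  move=> n; apply: contrapT => nex.
  have e0 : (0 : R) < n.+1%:R^-1 by rewrite invr_gt0 ltr0Sn.
  have hk := key hmin hc hinf w nu _ (@nbhsx_ballx R Omega nu _ e0); apply: hk.
  have fin2 := @finite_preimage G nat `I_n fi (fun x y _ _ => fiinj x y (in_setT x) (in_setT y)) (finite_II n).
  apply: (sub_finite_set _ fin2) => g /= bg.
  apply: contrapT => hn; apply: nex; exists g; split => //.
  by rewrite leqNgt; apply/negP.
have [gs gsP] := choice ex.
exists gs; split.
  move=> F finF.
  have := finite_image fi finF => /finite_seqP [s hs].
  have [M hM] := seq_bound s.
  exists M => n Mn Fgs.
  have : [set` s] (fi (gs n)) by rewrite -hs; exists (gs n).
  move=> /hM lt; have := (gsP n).2.
  by move=> h2; have := leq_trans Mn h2; rewrite leqNgt lt.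
apply/cvg_ballP => e e0.
near=> n.
apply: (@le_ball _ _ _ (n.+1%:R^-1)); last exact: (gsP n).1.
apply/ltW; near: n.
exact: (near_infty_natSinv_lt (PosNum e0)).
Unshelve. all: end_near.
Qed.


Lemma PE_inv h w : pseudoergodic alpha w -> pseudoergodic alpha (alpha h w).
Proof.
move=> pw; apply/seteqP; split => // nu _.
have : limit_set alpha w nu by rewrite pw.
move=> [gs [ti cv]]; exists (fun n => add (gs n) (opp h)); split.
  move=> F finF.
  have [N hN] := ti ((fun x => add x h) @` F) (finite_image _ finF).
  exists N => n Nn Fn; apply: (hN n Nn); exists (add (gs n) (opp h)) => //.
  by rewrite -(grp_addA hG) (grp_addNg hG) (grp_addg0 hG).
have -> : (fun n => alpha (add (gs n) (opp h)) (alpha h w)) = (fun n => alpha (gs n) w).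
  by apply: funext => n; rewrite alphaA alphaNK.
exact: cv.
Qed.

End PE.

Theorem proposition3p6 (G : Type) (add : G -> G -> G) (zero : G) (opp : G -> G)
  (R : realType) (Omega : metricType R) (alpha : G -> Omega -> Omega) :
  is_group add zero opp ->
  countably_infinite G ->
  compact [set: Omega] ->
  [set: Omega] !=set0 ->
  dynamical_system add alpha ->
  [<-> minimal alpha;
       Omega_PE alpha = [set: Omega];
       closed (Omega_PE alpha) /\ Omega_PE alpha !=set0].
Proof.
move=> hG [hcnt hinf] hc hne hds.
tfae=> [m|e|[c [w pw]]].
- apply/seteqP; split => // w _; exact: (@min_PE _ _ _ _ _ _ _ hG hds m hc hinf hcnt w).
- by rewrite e; split; [exact: closedT|exact: hne].
have sO : Defs.orbit alpha w `<=` Omega_PE alpha.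
  by move=> _ [g _ <-]; apply: (@PE_inv _ _ _ _ _ _ _ hG hds).
have hall : Omega_PE alpha = [set: Omega].
  apply/seteqP; split => // y _.
  have := closureS sO; rewrite -(proj1 (closure_id _) c); apply.
  by apply: (@limit_closure _ _ _ alpha w); rewrite pw.
move=> x; apply/seteqP; split => // y _.
have px : Omega_PE alpha x by rewrite hall.
by apply: (@limit_closure _ _ _ alpha x); rewrite px.
Qed.
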